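(* Let $G$ be a graph of order $n\ge 9$ with twin number $\tau$, and let $W$ be a $\tau$-set. Then $\beta_p(G)=n-1$ if and only if either (i) $\tau=n-1$, or (ii) $\tau=n-2$ and $G[W]\cong K_{n-2}$.
   Context: All graphs are finite, simple, undirected and connected. Two vertices $u,v$ are twins if $N(u)\setminus\{v\}=N(v)\setminus\{u\}$; the twin number $\tau(G)$ is the maximum cardinality of an equivalence class of the twin relation; a $\tau$-set is a set of pairwise twin vertices of cardinality $\tau(G)$. For a partition $\Pi=\{S_1,\dots,S_k\}$ of $V(G)$, $r(u|\Pi)=(d(u,S_1),\dots,d(u,S_k))$ with $d(u,S)=\min_{w\in S}d(u,w)$; $\Pi$ is locating if $r(u|\Pi)\ne r(v|\Pi)$ for all distinct $u,v$; $\beta_p(G)$ is the minimum size of a locating partition. *)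

(* Defs.v *)
From mathcomp Require Import all_boot.
Set Implicit Arguments. Unset Strict Implicit. Unset Printing Implicit Defensive.

Section Graph.
Variables (T : finType) (e : rel T).

Definition simple_graph : Prop := symmetric e /\ irreflexive e.
Definition graph_connected : Prop := forall u v : T, connect e u v.

Fixpoint within (n : nat) (u v : T) : bool :=
  match n with
  | 0 => u == v
  | n'.+1 => within n' u v || [exists w, within n' u w && e w v]
  end.

(* shortest-path distance (for connected graphs it is < #|T|) *)
Definition dist (u v : T) : nat := find (fun k => within k u v) (iota 0 #|T|).

Definition dist_set (u : T) (S : {set T}) : nat :=
  \big[minn/#|T|]_(w in S) dist u w.

Definition locating (P : {set {set T}}) : bool :=
  partition P [set: T] &&
  [forall u, forall v, (u != v) ==> [exists S in P, dist_set u S != dist_set v S]].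

Definition beta_p : nat :=
  find (fun k => [exists P : {set {set T}}, locating P && (#|P| == k)]) (iota 0 #|T|.+1).

Definition nbhd (u : T) : {set T} := [set w | e u w].
Definition twins (u v : T) : bool := (nbhd u :\ v) == (nbhd v :\ u).

Definition twin_number : nat := \max_(u : T) #|[set v | twins u v]|.

Definition tau_set (W : {set T}) : Prop :=
  (forall u v, u \in W -> v \in W -> twins u v) /\ #|W| = twin_number.

Definition induces_complete (W : {set T}) : Prop :=
  forall u v, u \in W -> v \in W -> u != v -> e u v.

End Graph.

(* Main.v *)
Require Import Defs.
From mathcomp Require Import all_boot zify.
Set Implicit Arguments. Unset Strict Implicit. Unset Printing Implicit Defensive.

Lemma within_refl (T : finType) (e : rel T) k x : within e k x x.
Proof. by elim: k => [|k IH] /=; rewrite ?eqxx ?IH. Qed.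

Lemma within_mono (T : finType) (e : rel T) k x y : within e k x y -> within e k.+1 x y.
Proof. by move=> h /=; rewrite h. Qed.

Lemma within_edge (T : finType) (e : rel T) k x y : e x y -> within e k.+1 x y.
Proof.
move=> exy; elim: k => [|k IH]; last exact: within_mono.
by apply/orP; right; apply/existsP; exists x; rewrite eqxx exy.
Qed.

Lemma within1 (T : finType) (e : rel T) x y : x != y -> within e 1 x y = e x y.
Proof.
move=> /negbTE nxy /=; rewrite nxy /=; apply/existsP/idP => [[w /andP[/eqP <- //]]|h].
by exists x; rewrite eqxx h.
Qed.

Lemma ex_first (T : finType) (e : rel T) x y : [exists w, (x == w) && e w y] = e x y.
Proof.
apply/existsP/idP => [[w /andP[/eqP <- //]]|h].
by exists x; rewrite eqxx h.
Qed.

Lemma dist_self (T : finType) (e : rel T) x : 0 < #|T| -> dist e x x = 0.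
Proof. by rewrite /dist; case: #|T| => [|n] //= _; rewrite eqxx. Qed.

Lemma dist_pos (T : finType) (e : rel T) x y : x != y -> 0 < dist e x y.
Proof.
move=> /negbTE h; have : 0 < #|T| by apply/card_gt0P; exists x.
by rewrite /dist; case: #|T| => [|n] //= _; rewrite h.
Qed.

Lemma dist_one (T : finType) (e : rel T) x y : 1 < #|T| -> x != y -> e x y -> dist e x y = 1.
Proof.
move=> + nxy exy; rewrite /dist; case: #|T| => [|[|n]] //= _.
by rewrite (negbTE nxy) ex_first exy.
Qed.

Lemma dist_two (T : finType) (e : rel T) x y : 1 < #|T| -> x != y -> ~~ e x y -> 1 < dist e x y.
Proof.
move=> + nxy exy; rewrite /dist; case: #|T| => [|[|n]] //= _.
by rewrite (negbTE nxy) ex_first (negbTE exy).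
Qed.

Lemma bigmin_le (T : finType) (S : {set T}) (F : T -> nat) m w : w \in S ->
  \big[minn/m]_(i in S) F i <= F w.
Proof.
move=> wS; rewrite -big_filter.
have : w \in [seq i <- index_enum T | i \in S] by rewrite mem_filter wS mem_index_enum.
elim: [seq i <- index_enum T | i \in S] => [|a s IH] //=.
rewrite inE big_cons => /orP[/eqP ->|ws]; first exact: geq_minl.
exact: leq_trans (geq_minr _ _) (IH ws).
Qed.

Lemma dist_set_in (T : finType) (e : rel T) x (S : {set T}) : x \in S -> dist_set e x S = 0.
Proof.
move=> xS; apply/eqP; rewrite -leqn0 -(@dist_self _ e x); first exact: bigmin_le.
by apply/card_gt0P; exists x.
Qed.

Lemma dist_set_pos (T : finType) (e : rel T) x (S : {set T}) : x \notin S -> 0 < dist_set e x S.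
Proof.
move=> xS; rewrite /dist_set; apply: (big_ind (fun k => 0 < k)).
- by apply/card_gt0P; exists x.
- by move=> a b ha hb; rewrite leq_min ha hb.
by move=> w wS; apply: dist_pos; apply: contraNneq xS => ->.
Qed.

Lemma dist_set_adj (T : finType) (e : rel T) x y (S : {set T}) : 1 < #|T| -> x \notin S -> y \in S -> e x y -> dist_set e x S = 1.
Proof.
move=> hT xS yS exy; apply/eqP; rewrite eqn_leq dist_set_pos // andbT.
rewrite -(@dist_one _ e x y) //; first exact: bigmin_le.
by apply: contraNneq xS => ->.
Qed.

Lemma dist_set_far (T : finType) (e : rel T) x (S : {set T}) : 1 < #|T| -> x \notin S ->
  (forall y, y \in S -> ~~ e x y) -> 1 < dist_set e x S.
Proof.
move=> hT xS h; rewrite /dist_set; apply: (big_ind (fun k => 1 < k)) => //.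
- by move=> a b ha hb; rewrite leq_min ha hb.
by move=> w wS; apply: dist_two => //; [apply: contraNneq xS => -> | exact: h].
Qed.

Lemma twins_nb (T : finType) (e : rel T) u v w : twins e u v -> w != u -> w != v -> e u w = e v w.
Proof.
move=> /eqP /setP /(_ w); rewrite !inE => h wu wv.
by move: h; rewrite wu wv /=.
Qed.

Lemma twins_sym (T : finType) (e : rel T) u v : twins e u v -> twins e v u.
Proof. by rewrite /twins eq_sym. Qed.

Lemma twins_within (T : finType) (e : rel T) u v k : twins e u v ->
  forall w, w != u -> w != v -> within e k u w -> within e k v w.
Proof.
move=> tw; elim: k => [|k IH] w wu wv /=.
  by rewrite eq_sym (negbTE wu) eq_sym (negbTE wv).
case/orP => [/(IH w wu wv) -> //|/existsP[x /andP[hx exw]]].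
have [xu|nxu] := eqVneq x u.
  subst x; rewrite -/(within e k.+1 v w); apply: within_edge.
  by rewrite -(twins_nb tw) // (negbTE wu) eq_sym.
have [xv|nxv] := eqVneq x v.
  by subst x; rewrite -/(within e k.+1 v w); apply: within_edge.
by apply/orP; right; apply/existsP; exists x; rewrite exw (IH x) .
Qed.

Lemma dist_twins (T : finType) (e : rel T) u v w : twins e u v -> w != u -> w != v ->
  dist e u w = dist e v w.
Proof.
move=> tw wu wv; rewrite /dist; apply: eq_find => k; apply/idP/idP.
  exact: twins_within.
by apply: twins_within => //; apply: twins_sym.
Qed.

Lemma dist_set_twins (T : finType) (e : rel T) u v (S : {set T}) : twins e u v ->
  (u \in S) = (v \in S) -> dist_set e u S = dist_set e v S.
Proof.
move=> tw huv; have [uS|uS] := boolP (u \in S).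
  by rewrite !dist_set_in // -huv.
apply: eq_bigr => w wS; apply: dist_twins => //.
  by apply: contraNneq uS => <-.
by apply: contraNneq uS => wv; rewrite huv -wv.
Qed.

Lemma locating_pblock (T : finType) (e : rel T) P u v : locating e P ->
  u != v -> pblock P u = pblock P v ->
  exists2 S, S \in P & dist_set e u S != dist_set e v S.
Proof.
move=> /andP[_ /forallP h] uv _; move: (h u) => /forallP /(_ v) /implyP /(_ uv).
by case/existsP => S /andP[SP hd]; exists S.
Qed.

Lemma same_block (T : finType) P (u v : T) S : partition P [set: T] -> S \in P ->
  pblock P u = pblock P v -> (u \in S) = (v \in S).
Proof.
move=> /and3P[/eqP cP tP _] SP huv.
have hu : u \in pblock P u by rewrite mem_pblock cP inE.
have hv : v \in pblock P v by rewrite mem_pblock cP inE.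
apply/idP/idP => h.
  by rewrite -(def_pblock tP SP h) huv.
by rewrite -(def_pblock tP SP h) -huv.
Qed.

Lemma twin_lower (T : finType) (e : rel T) P (W : {set T}) : locating e P ->
  (forall u v, u \in W -> v \in W -> twins e u v) -> {in W &, injective (pblock P)}.
Proof.
move=> loc tw u v uW vW huv; apply/eqP; apply: contraT => uv.
have [S SP hd] := locating_pblock loc uv huv; case/negP: hd.
apply/eqP; apply: dist_set_twins; first exact: tw.
by apply: same_block SP huv; case/andP: loc.
Qed.

Lemma twin_lower_card (T : finType) (e : rel T) P (W : {set T}) : locating e P ->
  (forall u v, u \in W -> v \in W -> twins e u v) -> #|W| <= #|P|.
Proof.
move=> loc tw; rewrite -(card_in_imset (twin_lower loc tw)).
apply: subset_leq_card; apply/subsetP => _ /imsetP[x xW ->].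
case/andP: loc => /and3P[/eqP cP _ _] _.
by apply: pblock_mem; rewrite cP inE.
Qed.

Lemma locating_rep (T : finType) (e : rel T) (f : T -> T) : 1 < #|T| ->
  (forall u v, u != v -> f u = f v -> exists w,
     [/\ forall y, f y = f w -> y = w, u != w, v != w & e u w != e v w]) ->
  locating e (preim_partition f [set: T]).
Proof.
move=> hT hf; rewrite /locating preim_partitionP /=.
apply/forallP => u; apply/forallP => v; apply/implyP => uv.
have CP x : [set y in [set: T] | f x == f y] \in preim_partition f [set: T].
  by apply/imsetP; exists x.
have [fuv|fuv] := eqVneq (f u) (f v).
  have [w [hw uw vw euv]] := hf u v uv fuv.
  apply/existsP; exists [set y in [set: T] | f w == f y]; rewrite CP /=.
  have memS y : (y \in [set y in [set: T] | f w == f y]) = (y == w).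
    rewrite !inE; apply/eqP/eqP => [h|->] //; exact: hw.
  have uS : u \notin [set y in [set: T] | f w == f y] by rewrite memS.
  have vS : v \notin [set y in [set: T] | f w == f y] by rewrite memS.
  have wS : w \in [set y in [set: T] | f w == f y] by rewrite memS.
  case: (boolP (e u w)) euv => euw evw.
    rewrite (dist_set_adj hT uS wS euw); apply/eqP => h.
    have hf2 : 1 < dist_set e v [set y in [set: T] | f w == f y].
      apply: dist_set_far => // y; rewrite memS => /eqP ->.
      by move: evw; case: (e v w).
    by rewrite -h in hf2.
  have evw' : e v w by move: evw; case: (e v w).
  rewrite (dist_set_adj hT vS wS evw'); apply/eqP => h.
  have hf2 : 1 < dist_set e u [set y in [set: T] | f w == f y].
    by apply: dist_set_far => // y; rewrite memS => /eqP ->.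
  by rewrite h in hf2.
apply/existsP; exists [set y in [set: T] | f u == f y]; rewrite CP /=.
rewrite dist_set_in; last by rewrite !inE eqxx.
by rewrite eq_sym -lt0n dist_set_pos // !inE fuv.
Qed.

Lemma preim_card (T : finType) (f : T -> T) :
  #|preim_partition f [set: T]| <= #|f @: [set: T]|.
Proof.
have -> : preim_partition f [set: T] =
   (fun a => [set y in [set: T] | a == f y]) @: (f @: [set: T]).
  by rewrite -imset_comp.
exact: leq_imset_card.
Qed.

Definition merge1 (T : eqType) (a b : T) := fun z => if z == b then a else z.
Definition merge2 (T : eqType) (a b c d : T) :=
  fun z => if z == b then a else if z == d then c else z.

Lemma good1 (T : finType) (e : rel T) a b w : 1 < #|T| -> a != b -> w != a -> w != b ->
  e a w != e b w ->
  exists2 P, locating e P & #|P| <= #|T| - 1.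
Proof.
move=> hT ab wa wb eab; exists (preim_partition (merge1 a b) [set: T]).
  apply: locating_rep => // u v uv; rewrite /merge1.
  have hw : forall y, (if y == b then a else y) = (if w == b then a else w) -> y = w.
    by move=> y; rewrite (negbTE wb); case: eqP => // _ /eqP; rewrite eq_sym (negbTE wa).
  have [ub|ub] := eqVneq u b; have [vb|vb] := eqVneq v b.
  - by move: uv; rewrite ub vb eqxx.
  - rewrite ub /= => av; exists w; split => //; first by rewrite eq_sym.
      by rewrite -av eq_sym.
    by rewrite -av eq_sym.
  - rewrite vb /= => ua; exists w; split => //; first by rewrite ua eq_sym.
      by rewrite eq_sym.
    by rewrite ua.
  - by move=> /= h; move: uv; rewrite h eqxx.
apply: leq_trans (preim_card _) _.
have : merge1 a b @: [set: T] \subset [set: T] :\ b.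
  apply/subsetP => _ /imsetP[x _ ->]; rewrite /merge1 !inE.
  by case: (eqVneq x b) => [_|xb]; rewrite andbT.
move/subset_leq_card; rewrite [#|[set: T] :\ b|](_ : _ = #|T| - 1) //.
by move: (cardsD1 b [set: T]); rewrite cardsT inE add1n => ->; rewrite subn1.
Qed.

Lemma merge2_pairs (T : finType) (a b c d u v : T) :
  a != b -> a != c -> a != d -> c != b -> c != d -> b != d ->
  u != v -> merge2 a b c d u = merge2 a b c d v ->
  [|| (u == a) && (v == b), (u == b) && (v == a), (u == c) && (v == d) | (u == d) && (v == c)].
Proof.
move=> ab ac ad cb cd bd uv; rewrite /merge2.
have [ub|ub] := eqVneq u b; have [ud|ud] := eqVneq u d;
have [vb|vb] := eqVneq v b; have [vd|vd] := eqVneq v d => //= h;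
  subst; rewrite ?eqxx ?orbT //;
  try (by move: uv; rewrite eqxx);
  try (by move: bd; rewrite eqxx);
  try (by move: ab; rewrite eqxx);
  try (by move: ad; rewrite eqxx);
  try (by move: cb; rewrite eqxx);
  try (by move: cd; rewrite eqxx).
  try (by move: ac; rewrite eqxx).
all: by rewrite eqxx in ac.
Qed.

Lemma good2 (T : finType) (e : rel T) a b c d w1 w2 : 1 < #|T| ->
  a != b -> a != c -> a != d -> c != b -> c != d -> b != d ->
  w1 != a -> w1 != b -> w1 != c -> w1 != d ->
  w2 != a -> w2 != b -> w2 != c -> w2 != d ->
  e a w1 != e b w1 -> e c w2 != e d w2 ->
  exists2 P, locating e P & #|P| <= #|T| - 2.
Proof.
move=> hT ab ac ad cb cd bd w1a w1b w1c w1d w2a w2b w2c w2d e1 e2.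
have sing w : w != a -> w != b -> w != c -> w != d ->
    forall y, merge2 a b c d y = merge2 a b c d w -> y = w.
  move=> wa wb wc wd y; rewrite /merge2 (negbTE wb) (negbTE wd).
  case: eqP => [_ aw|_]; first by move: wa; rewrite aw eqxx.
  by case: eqP => [_ cw|_ //]; move: wc; rewrite cw eqxx.
exists (preim_partition (merge2 a b c d) [set: T]).
  apply: locating_rep => // u v uv huv.
  case/or4P: (merge2_pairs ab ac ad cb cd bd uv huv) => /andP[/eqP -> /eqP ->].
  - by exists w1; split; [apply: sing | rewrite eq_sym | rewrite eq_sym | ].
  - by exists w1; split; [apply: sing | rewrite eq_sym | rewrite eq_sym | rewrite eq_sym].
  - by exists w2; split; [apply: sing | rewrite eq_sym | rewrite eq_sym | ].
  - by exists w2; split; [apply: sing | rewrite eq_sym | rewrite eq_sym | rewrite eq_sym].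
apply: leq_trans (preim_card _) _.
have : merge2 a b c d @: [set: T] \subset [set: T] :\ b :\ d.
  apply/subsetP => _ /imsetP[x _ ->]; rewrite /merge2 !inE andbT.
  case: (eqVneq x b) => [_|xb]; first by rewrite ad ab.
  by case: (eqVneq x d) => [_|xd]; rewrite ?cd ?cb ?xd ?xb.
move/subset_leq_card; rewrite [#|[set: T] :\ b :\ d|](_ : _ = #|T| - 2) //.
move: (cardsD1 b [set: T]) (cardsD1 d ([set: T] :\ b)).
rewrite cardsT !inE eq_sym bd /= !add1n => -> ->.
by rewrite subn2.
Qed.

Lemma beta_le (T : finType) (e : rel T) P : locating e P -> #|P| <= #|T| -> beta_p e <= #|P|.
Proof.
move=> loc hP; rewrite leqNgt; apply/negP => hlt.
have := before_find 0 hlt; rewrite nth_iota ?size_iota ?ltnS // add0n.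
by move/negbT/negP; apply; apply/existsP; exists P; rewrite loc eqxx.
Qed.

Lemma beta_spec (T : finType) (e : rel T) : beta_p e <= #|T| ->
  exists2 P, locating e P & #|P| = beta_p e.
Proof.
move=> hb.
have hs : has (fun k => [exists P : {set {set T}}, locating e P && (#|P| == k)]) (iota 0 #|T|.+1).
  by rewrite has_find size_iota ltnS.
have := nth_find 0 hs; rewrite -/(beta_p e) nth_iota ?size_iota ?ltnS // add0n.
by case/existsP => P /andP[loc /eqP hP]; exists P.
Qed.

Lemma le1_eq (T : finType) (A : {set T}) x y : #|A| <= 1 -> x \in A -> y \in A -> x = y.
Proof.
move=> h xA yA; apply/eqP; apply: contraTT h => xy; rewrite -ltnNge.
by apply/card_gt1P; exists x, y.
Qed.

Lemma gt1 (T : finType) (A : {set T}) x y : x \in A -> y \in A -> x != y -> 1 < #|A|.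
Proof. by move=> xA yA xy; apply/card_gt1P; exists x, y. Qed.

Lemma card_D2 (T : finType) (p q : T) : p != q -> #|[set: T] :\ p :\ q| = #|T| - 2.
Proof.
move=> pq; move: (cardsD1 p [set: T]) (cardsD1 q ([set: T] :\ p)).
by rewrite cardsT !inE eq_sym pq /= !add1n => -> ->; rewrite subn2.
Qed.

Lemma outside (T : finType) (A : {set T}) : #|A| < #|T| -> exists y, y \notin A.
Proof.
move=> h; apply/existsP; rewrite -negb_forall; apply: contraTN h => /forallP hA.
rewrite -leqNgt; apply: subset_leq_card; apply/subsetP => x _; exact: hA.
Qed.

Lemma tn_ge (T : finType) (e : rel T) (S : {set T}) u : u \in S ->
  (forall v, v \in S -> twins e u v) -> #|S| <= twin_number e.
Proof.
move=> uS h; rewrite /twin_number; apply: (@leq_trans #|[set v | twins e u v]|); last by apply: leq_bigmax.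
by apply: subset_leq_card; apply/subsetP => v vS; rewrite inE h.
Qed.

Lemma complete_twins (T : finType) (e : rel T) u v : irreflexive e ->
  (forall x y, x != y -> e x y) -> twins e u v.
Proof.
move=> irr h; apply/eqP/setP => y; rewrite !inE.
have [yu|yu] := eqVneq y u; have [yv|yv] := eqVneq y v => //=; rewrite ?andbF ?andbT.
- by rewrite yu irr.
- by rewrite yv irr.
- by rewrite !h // eq_sym.
Qed.

Lemma reach (T : finType) (e : rel T) (A : {set T}) u v : simple_graph e -> graph_connected e ->
  (forall x y, e x y -> x \in A -> y \in A) -> u \in A -> v \in A.
Proof.
move=> [sym irr] conn hA uA.
have cl : closed e A.
  move=> x y exy; apply/idP/idP; first exact: hA.
  by apply: hA; rewrite sym.
by rewrite -(closed_connect cl (conn u v)).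
Qed.


Lemma has_nbr (T : finType) (e : rel T) x : simple_graph e -> graph_connected e -> 1 < #|T| ->
  exists y, e x y.
Proof.
move=> sg conn hT; apply/existsP; apply: contraTT hT => /existsPn hx.
rewrite -leqNgt.
have h : forall v, v \in [set x].
  move=> v; apply: (reach v sg conn _ (set11 x)) => a b eab.
  by rewrite inE => /eqP ax; move: (hx b); rewrite -ax eab.
by rewrite -(cards1 x); apply: subset_leq_card; apply/subsetP => v _; exact: h.
Qed.

Lemma clique_conclude (T : finType) (e : rel T) (W X : {set T}) : 9 <= #|T| -> tau_set e W ->
  #|X| = #|T| - 2 ->
  (forall u v, u \in X -> v \in X -> u != v -> e u v) ->
  (forall u v, u \in X -> v \in X -> twins e u v) ->
  (forall w u, w \notin X -> u \in X -> ~~ twins e w u) ->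
  twin_number e = #|T| - 2 /\ induces_complete e W.
Proof.
move=> h9 [twW hW] hX cX tX ntX.
have [x0 x0X] : exists x0, x0 \in X by apply/set0Pn; rewrite -card_gt0 hX; lia.
have hge : #|X| <= twin_number e by apply: (tn_ge x0X) => v vX; exact: tX.
have sub : W \subset X.
  apply/subsetP => w wW; apply: contraT => wX.
  have : 0 < #|W :&: X|.
    have := cardsUI W X; have : #|W :|: X| <= #|T| by apply: max_card.
    lia.
  case/card_gt0P => u; rewrite inE => /andP[uW uX].
  by move: (ntX w u wX uX); rewrite twW.
have := subset_leq_card sub; split; first lia.
by move=> u v uW vW; apply: cX; apply: (subsetP sub).
Qed.

Definition nogood (T : finType) (e : rel T) :=
  forall P, locating e P -> #|P| <= #|T| - 2 -> False.

Lemma dichotomy (T : finType) (e : rel T) w : simple_graph e -> 1 < #|T| -> nogood e ->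
  #|[set y | e w y]| <= 1 \/ #|[set y | (y != w) && ~~ e w y]| <= 1.
Proof.
move=> [sym irr] hT ng.
case: (leqP #|[set y | e w y]| 1) => [|hN]; first by left.
case: (leqP #|[set y | (y != w) && ~~ e w y]| 1) => [|hM]; first by right.
exfalso.
case/card_gt1P: hN => c1 [c2 []]; rewrite !inE => e1 e2 c12.
case/card_gt1P: hM => d1 [d2 []]; rewrite !inE => /andP[d1w n1] /andP[d2w n2] d12.
have cd x y : e w x -> ~~ e w y -> x != y.
  by move=> ex ny; apply: contraNneq ny => <-.
have wc x : e w x -> w != x by move=> ex; apply: contraTneq ex => <-; rewrite irr.
have wd1 : w != d1 by rewrite eq_sym.
have wd2 : w != d2 by rewrite eq_sym.
have f1 : e c1 w != e d1 w by rewrite sym e1 sym (negbTE n1).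
have f2 : e c2 w != e d2 w by rewrite sym e2 sym (negbTE n2).
have [P loc hP] := @good2 T e c1 d1 c2 d2 w w hT (cd _ _ e1 n1) c12 (cd _ _ e1 n2)
  (cd _ _ e2 n1) (cd _ _ e2 n2) d12 (wc _ e1) wd1 (wc _ e2) wd2 (wc _ e1) wd1 (wc _ e2) wd2 f1 f2.
exact: ng loc hP.
Qed.

Lemma card_U1_le (T : finType) (a : T) (A : {set T}) : #|a |: A| <= #|A|.+1.
Proof. by rewrite cardsU1 -add1n leq_add2r leq_b1. Qed.

Lemma card4 (T : finType) (a b c d : T) : #|[set x in [:: a; b; c; d]]| <= 4.
Proof. by rewrite cardsE; apply: card_size. Qed.

Lemma leafnb (T : finType) (e : rel T) x y z : #|[set y | e x y]| <= 1 -> e x y -> e x z -> y = z.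
Proof. by move=> h ey ez; apply: (le1_eq h); rewrite inE. Qed.

Lemma coleafnb (T : finType) (e : rel T) x y z : #|[set y | (y != x) && ~~ e x y]| <= 1 ->
  y != x -> ~~ e x y -> z != x -> ~~ e x z -> y = z.
Proof. by move=> h yx ey zx ez; apply: (le1_eq h); rewrite inE ?yx ?zx. Qed.

Lemma caseA (T : finType) (e : rel T) (W : {set T}) l : simple_graph e -> graph_connected e ->
  9 <= #|T| -> tau_set e W -> twin_number e <= #|T| - 1 ->
  (forall w, #|[set y | e w y]| <= 1 \/ #|[set y | (y != w) && ~~ e w y]| <= 1) ->
  #|[set y | e l y]| <= 1 ->
  twin_number e = #|T| - 1 \/ (twin_number e = #|T| - 2 /\ induces_complete e W).
Proof.
move=> sg conn h9 tW htau D hl; have [sym irr] := sg.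
have hT : 1 < #|T| by lia.
have neq x y : e x y -> x != y by move=> exy; apply: contraTneq exy => ->; rewrite irr.
have [h eh] := has_nbr l sg conn hT.
have Nl y : e l y -> y = h by move=> ey; apply: (leafnb hl ey eh).
have lh : l != h := neq _ _ eh.
have hco : #|[set y | (y != h) && ~~ e h y]| <= 1.
  case: (D h) => // hle; exfalso.
  have all2 : forall v, v \in [set l; h].
    move=> v; apply: (reach v sg conn _ (setU11 l [set h])) => x y exy.
    rewrite !inE => /orP[/eqP xl|/eqP xh].
      by rewrite xl in exy; rewrite (Nl y exy) eqxx orbT.
    rewrite xh in exy; rewrite (leafnb hle exy (_ : e h l)) ?eqxx //.
    by rewrite sym.
  have : #|T| <= #|[set l; h]|.
    by apply: subset_leq_card; apply/subsetP => v _; exact: all2.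
  by rewrite cards2 lh; lia.
have Mh y z : y != h -> ~~ e h y -> z != h -> ~~ e h z -> y = z.
  by move=> *; apply: (coleafnb hco).
have claim3 : forall z, z != h -> e h z.
  move=> z zh; apply: contraT => nz.
  have zl : z != l by apply: contraNneq nz => ->; rewrite sym.
  have nzl : ~~ e z l by apply: contraNN zh => ezl; apply/eqP; apply: Nl; rewrite sym.
  have nzh : ~~ e z h by rewrite sym.
  have zleaf : #|[set y | e z y]| <= 1.
    case: (D z) => // hM; exfalso.
    have m1_1 : l \in [set y | (y != z) && ~~ e z y] by rewrite inE eq_sym zl nzl.
    have m2_1 : h \in [set y | (y != z) && ~~ e z y] by rewrite inE eq_sym zh nzh.
    by have := gt1 m1_1 m2_1 lh; rewrite ltnNge hM.
  have [g eg] := has_nbr z sg conn hT.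
  have gh : g != h by apply: contraNneq nzh => <-.
  have gl : g != l by apply: contraNneq nzl => <-.
  have gz : g != z by rewrite eq_sym; apply: neq.
  have ehg : e h g by apply: contraT => ng; move: (Mh g z gh ng zh nz) => /eqP; rewrite (negbTE gz).
  have gco : #|[set y | (y != g) && ~~ e g y]| <= 1.
    case: (D g) => // hN; exfalso.
    have m1_2 : z \in [set y | e g y] by rewrite inE sym.
    have m2_2 : h \in [set y | e g y] by rewrite inE sym.
    by have := gt1 m1_2 m2_2 zh; rewrite ltnNge hN.
  have h4 : 4 < #|T| by apply: leq_trans h9.
  have [y] := outside (leq_ltn_trans (card4 l h z g) h4).
  rewrite !inE !negb_or => /and4P[yl yh yz yg].
  have ehy : e h y by apply: contraT => ny; move: (Mh y z yh ny zh nz) => /eqP; rewrite (negbTE yz).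
  have nyl : ~~ e y l by apply: contraNN yh => eyl; apply/eqP; apply: Nl; rewrite sym.
  have nyz : ~~ e y z by apply: contraNN yg => eyz; apply/eqP; apply: (leafnb zleaf); rewrite // sym.
  have yleaf : #|[set y' | e y y']| <= 1.
    case: (D y) => // hM; exfalso.
    have m1_3 : l \in [set y' | (y' != y) && ~~ e y y'] by rewrite inE eq_sym yl nyl.
    have m2_3 : z \in [set y' | (y' != y) && ~~ e y y'] by rewrite inE eq_sym yz nyz.
    have lz : l != z by rewrite eq_sym.
    by have := gt1 m1_3 m2_3 lz; rewrite ltnNge hM.
  have nyg : ~~ e y g by apply: contraNN gh => eyg; apply/eqP; apply: (leafnb yleaf eyg); rewrite sym.
  have m1_4 : l \in [set y' | (y' != g) && ~~ e g y'].
    by rewrite inE eq_sym gl sym; apply: contraNN gh => egl; apply/eqP; apply: Nl.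
  have m2_4 : y \in [set y' | (y' != g) && ~~ e g y'] by rewrite inE yg sym.
  have ly : l != y by rewrite eq_sym.
  by have := gt1 m1_4 m2_4 ly; rewrite ltnNge gco.
have eh' z : z != h -> e z h by move=> zh; rewrite sym claim3.
case: (boolP [forall z, (z != h) ==> (#|[set y | e z y]| <= 1)]) => [/forallP A1|A2].
  left.
  have tw v : v \in [set: T] :\ h -> twins e l v.
    rewrite !inE andbT => vh; apply/eqP/setP => y; rewrite !inE.
    have Ny x : x != h -> e x y = (y == h).
      move=> xh; apply/idP/eqP => [exy|->]; last exact: eh'.
      exact: (leafnb (implyP (A1 x) xh) exy (eh' x xh)).
    rewrite (Ny l lh) (Ny v vh); case: (eqVneq y h) => [->|]; last by rewrite !andbF.
    by rewrite !andbT [h == v]eq_sym [h == l]eq_sym vh lh.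
  have lS : l \in [set: T] :\ h by rewrite !inE lh.
  have := tn_ge lS tw.
  have -> : #|[set: T] :\ h| = #|T| - 1.
    by move: (cardsD1 h [set: T]); rewrite cardsT inE add1n => ->; rewrite subn1.
  by move=> hge; apply/eqP; rewrite eqn_leq htau hge.
right.
case/forallPn: A2 => c; rewrite negb_imply => /andP[ch hc].
have cco : #|[set y | (y != c) && ~~ e c y]| <= 1 by case: (D c) => // hh; rewrite hh in hc.
have cl : c != l by apply: contraNneq hc => ->.
have ncl : ~~ e c l by apply: contraNN ch => ecl; apply/eqP; apply: Nl; rewrite sym.
have Mc z : z != c -> z != l -> e c z.
  move=> zc zl; apply: contraT => nz; move: (coleafnb cco zc nz (negbT (introF eqP (fun E : l = c => (negP cl) (introT eqP (esym E))))) ncl) => /eqP.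
  by rewrite (negbTE zl).
have claim : forall y x, y != l -> y != h -> x != y -> x != l -> e y x.
  move=> y x yl yh xy xl; have [yc|yc] := eqVneq y c; first by subst y; apply: Mc.
  have eyc : e y c by rewrite sym; apply: Mc.
  have yco : #|[set y' | (y' != y) && ~~ e y y']| <= 1.
    case: (D y) => // hN; exfalso.
    have m1 : c \in [set y' | e y y'] by rewrite inE.
    have m2 : h \in [set y' | e y y'] by rewrite inE eh'.
    by have := gt1 m1 m2 ch; rewrite ltnNge hN.
  have nyl : ~~ e y l by apply: contraNN yh => eyl; apply/eqP; apply: Nl; rewrite sym.
  have ly : l != y by rewrite eq_sym.
  apply: contraT => nyx; move: (coleafnb yco xy nyx ly nyl) => /eqP.
  by rewrite (negbTE xl).
have memX u : (u \in [set: T] :\ l :\ h) = (u != h) && (u != l) by rewrite !inE andbT.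
have euX u y : u \in [set: T] :\ l :\ h -> e u y = (y != u) && (y != l).
  rewrite memX => /andP[uh ul]; apply/idP/idP.
    move=> euy; apply/andP; split; first by rewrite eq_sym; apply: neq.
    by apply: contraNneq uh => yl; subst y; apply/eqP; apply: Nl; rewrite sym.
  by case/andP => yu yl; apply: claim.
apply: (clique_conclude (X := [set: T] :\ l :\ h)) => //.
- exact: card_D2.
- by move=> u v uX vX uv; rewrite (euX u v uX) eq_sym uv /=; move: vX; rewrite memX => /andP[].
- move=> u v uX vX; apply/eqP/setP => y; rewrite !inE (euX u y uX) (euX v y vX).
  by case: (y != u); case: (y != v).
move=> w u wX uX; apply/negP => tw.
move: wX; rewrite memX negb_and !negbK => /orP[/eqP wh|/eqP wl]; subst w.
  have ul : l != u by move: uX; rewrite memX => /andP[_]; rewrite eq_sym.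
  by move: (twins_nb tw lh ul); rewrite sym eh (euX u l uX) eqxx andbF.
have : 0 < #|[set: T] :\ l :\ h :\ u|.
  by move: (cardsD1 u ([set: T] :\ l :\ h)); rewrite uX card_D2 // add1n; lia.
case/card_gt0P => x; rewrite in_setD1 memX => /andP[xu /andP[xh xl]].
move: (twins_nb tw xl xu); rewrite (euX u x uX) xu xl.
case: (boolP (e l x)) => // elx _; by move: xh; rewrite (Nl x elx) eqxx.
Qed.

Lemma caseB (T : finType) (e : rel T) (W : {set T}) : simple_graph e ->
  9 <= #|T| -> tau_set e W -> twin_number e <= #|T| - 1 -> nogood e ->
  (forall w, #|[set y | (y != w) && ~~ e w y]| <= 1) ->
  twin_number e = #|T| - 1 \/ (twin_number e = #|T| - 2 /\ induces_complete e W).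
Proof.
move=> sg h9 tW htau ng hco; have [sym irr] := sg.
have hT : 1 < #|T| by apply: leq_trans h9.
have neq x y : e x y -> x != y by move=> exy; apply: contraTneq exy => ->; rewrite irr.
have Mx x y z : y != x -> z != x -> ~~ e x y -> z != y -> e x z.
  move=> yx zx nxy zy; apply: contraT => nz; move: (coleafnb (hco x) zx nz yx nxy) => /eqP.
  by rewrite (negbTE zy).
case: (boolP [forall u, forall v, (u != v) ==> e u v]) => [/forallP hall|].
  exfalso; have : 0 < #|[set: T]| by rewrite cardsT; apply: leq_trans h9.
  case/card_gt0P => x0 _.
  have all2 : forall x y, x != y -> e x y by move=> x y; apply/implyP; move/forallP: (hall x).
  have := @tn_ge T e [set: T] x0 (in_setT x0) (fun v _ => complete_twins x0 v irr all2).
  rewrite cardsT; move: htau; lia.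
case/forallPn => a /forallPn [a']; rewrite negb_imply => /andP[aa' naa'].
have a'a : a' != a by rewrite eq_sym.
have na'a : ~~ e a' a by rewrite sym.
have Ma y : y != a -> y != a' -> e a y by move=> ya ya'; apply: (Mx a a' y).
have Ma' y : y != a' -> y != a -> e a' y by move=> ya' ya; apply: (Mx a' a y).
case: (boolP [exists b, [exists b', [&& b != a, b != a', b' != b & ~~ e b b']]]).
  case/existsP => b /existsP [b' /and4P[ba ba' b'b nbb']].
  have bb' : b != b' by rewrite eq_sym.
  have nb'b : ~~ e b' b by rewrite sym.
  have b'a : b' != a by apply: contraNneq nbb' => ->; rewrite sym; apply: Ma.
  have b'a' : b' != a' by apply: contraNneq nbb' => ->; rewrite sym; apply: Ma'.
  set S := [set x in [:: a; a'; b; b']].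
  have : 1 < #|~: S|.
    have := cardsC S; have := card4 a a' b b'; rewrite -/S; lia.
  case/card_gt1P => u1 [u2 []]; rewrite !inE !negb_or => /and4P[u1a u1a' u1b u1b'] /and4P[u2a u2a' u2b u2b'] u12.
  have f1 : e a a' != e u1 a' by rewrite (negbTE naa') sym (Ma' u1).
  have f2 : e b b' != e u2 b' by rewrite (negbTE nbb') sym (Mx b' b u2).
  have nsym (x y : T) : x != y -> y != x by rewrite eq_sym.
  have [P loc hP] := @good2 T e a u1 b u2 a' b' hT (nsym _ _ u1a) (nsym _ _ ba)
    (nsym _ _ u2a) (nsym _ _ u1b) (nsym _ _ u2b) u12
    a'a (nsym _ _ u1a') (nsym _ _ ba') (nsym _ _ u2a')
    b'a (nsym _ _ u1b') b'b (nsym _ _ u2b') f1 f2.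
  by case: (ng P loc hP).
move=> nex.
have hB b y : b != a -> b != a' -> y != b -> e b y.
  move=> ba ba' yb; apply: contraT => nby; case/negP: nex.
  by apply/existsP; exists b; apply/existsP; exists y; rewrite ba ba' yb nby.
have memX u : (u \in [set: T] :\ a :\ a') = (u != a') && (u != a) by rewrite !inE andbT.
have euX u y : u \in [set: T] :\ a :\ a' -> e u y = (y != u).
  rewrite memX => /andP[ua' ua]; apply/idP/idP; first by move/neq; rewrite eq_sym.
  by apply: hB.
right; apply: (clique_conclude (X := [set: T] :\ a :\ a')) => //.
- exact: card_D2.
- by move=> u v uX vX uv; rewrite (euX u v uX) eq_sym.
- move=> u v uX vX; apply/eqP/setP => y; rewrite !inE (euX u y uX) (euX v y vX).
  by rewrite andbC.
move=> w u wX uX; apply/negP => tw.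
move: wX; rewrite memX negb_and !negbK => /orP[/eqP wa'|/eqP wa]; subst w.
  have au : a != u by move: uX; rewrite memX => /andP[_]; rewrite eq_sym.
  by move: (twins_nb tw aa' au); rewrite (negbTE na'a) (euX u a uX) au.
have a'u : a' != u by move: uX; rewrite memX => /andP[]; rewrite eq_sym.
by move: (twins_nb tw a'a a'u); rewrite (negbTE naa') (euX u a' uX) a'u.
Qed.

Lemma fwd (T : finType) (e : rel T) (W : {set T}) : simple_graph e -> graph_connected e ->
  9 <= #|T| -> tau_set e W -> beta_p e = #|T| - 1 ->
  twin_number e = #|T| - 1 \/ (twin_number e = #|T| - 2 /\ induces_complete e W).
Proof.
move=> sg conn h9 tW hb.
have hT : 1 < #|T| by apply: leq_trans h9.
have hbn : beta_p e <= #|T| by rewrite hb leq_subr.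
have [P0 loc0 hP0] := beta_spec hbn.
have htau : twin_number e <= #|T| - 1.
  case: tW => twW <-; rewrite -hb -hP0; exact: twin_lower_card loc0 twW.
have ng : nogood e.
  move=> P loc hP; have := beta_le loc (leq_trans hP (leq_subr _ _)).
  rewrite hb; move: hP h9; lia.
have D w := dichotomy w sg hT ng.
case: (boolP [exists l, #|[set y | e l y]| <= 1]) => [/existsP [l hl]|/existsPn hnl].
  exact: (caseA sg conn h9 tW htau D hl).
apply: (caseB sg h9 tW htau ng) => w; case: (D w) => //.
by rewrite (negbTE (hnl w)).
Qed.

Lemma three_out (T : finType) (W : {set T}) x y v : #|W| = #|T| - 2 -> x \notin W -> y \notin W ->
  x != y -> v \notin W -> v != x -> v != y -> False.
Proof.
move=> hW xW yW xy vW vx vy.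
set S := [set z in [:: x; y; v]].
have hS : #|S| = 3.
  rewrite cardsE; apply/card_uniqP; rewrite /= !inE negb_or xy.
  by rewrite !(eq_sym _ v) vx vy.
have sub : W \subset ~: S.
  apply/subsetP => z zW; rewrite !inE !negb_or.
  by apply/and3P; split; apply: contraTneq zW => ->.
have := subset_leq_card sub; have := cardsC S; rewrite hS hW.
have : 9 <= #|T| \/ #|T| < 9 by lia.
lia.
Qed.

Lemma beta_of (T : finType) (e : rel T) k : k <= #|T| ->
  (forall P, locating e P -> k <= #|P|) ->
  (exists2 P, locating e P & #|P| <= k) -> beta_p e = k.
Proof.
move=> hk low [P loc hP].
have h1 := beta_le loc (leq_trans hP hk).
have [P' loc' hP'] := beta_spec (leq_trans h1 (leq_trans hP hk)).
have := low P' loc'; rewrite hP'; move: h1 hP; lia.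
Qed.

Lemma bwd1 (T : finType) (e : rel T) (W : {set T}) : simple_graph e -> graph_connected e ->
  9 <= #|T| -> tau_set e W -> twin_number e = #|T| - 1 -> beta_p e = #|T| - 1.
Proof.
move=> sg conn h9 [twW hW] htau; have [sym irr] := sg.
have nsym (x y : T) : x != y -> y != x by rewrite eq_sym.
have hT : 1 < #|T| by apply: leq_trans h9.
rewrite htau in hW.
apply: beta_of; first exact: leq_subr.
  by move=> P loc; rewrite -hW; exact: twin_lower_card loc twW.
have hlt : #|W| < #|T| by rewrite hW; lia.
have [z zW] := outside hlt.
have inW y : y != z -> y \in W.
  move=> yz; apply: contraT => yW.
  have sub : W \subset [set: T] :\ z :\ y.
    apply/subsetP => w wW; rewrite !inE andbT.
    by apply/andP; split; apply: contraTneq wW => ->.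
  have := subset_leq_card sub; rewrite card_D2 ?hW; last by rewrite eq_sym.
  lia.
have [g eg] := has_nbr z sg conn hT.
have gz : g != z by apply: contraTneq eg => ->; rewrite irr.
have ezW w : w \in W -> e z w.
  move=> wW; have [->//|wg] := eqVneq w g.
  have wz : w != z by apply: contraTneq wW => ->.
  have := twins_nb (twW g w (inW g gz) wW) (nsym _ _ gz) (nsym _ _ wz).
  by rewrite sym eg sym.
case: (boolP [exists w1, exists w2, [&& w1 \in W, w2 \in W, w1 != w2 & ~~ e w1 w2]]).
  case/existsP => w1 /existsP [w2 /and4P[w1W w2W w12 n12]].
  have zw1 : z != w1 by apply: contraNneq zW => ->.
  have w2z : w2 != z by apply: contraNneq zW => <-.
  apply: (good1 hT zw1 w2z (nsym _ _ w12)).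
  by rewrite (ezW w2 w2W) (negbTE n12).
move=> nex; exfalso.
have allE x y : x != y -> e x y.
  move=> xy; have [xz|xz] := eqVneq x z.
    by subst x; apply: ezW; apply: inW; rewrite eq_sym.
  have [yz|yz] := eqVneq y z.
    by subst y; rewrite sym; apply: ezW; apply: inW.
  apply: contraT => nxy; case/negP: nex.
  by apply/existsP; exists x; apply/existsP; exists y; rewrite !inW // xy nxy.
have := @tn_ge T e [set: T] z (in_setT z) (fun v _ => complete_twins z v irr allE).
rewrite cardsT htau; lia.
Qed.

Lemma bwd2 (T : finType) (e : rel T) (W : {set T}) : simple_graph e -> graph_connected e ->
  9 <= #|T| -> tau_set e W -> twin_number e = #|T| - 2 -> induces_complete e W ->
  beta_p e = #|T| - 1.
Proof.
move=> sg conn h9 [twW hW] htau cW; have [sym irr] := sg.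
have nsym (x y : T) : x != y -> y != x by rewrite eq_sym.
have hT : 1 < #|T| by apply: leq_trans h9.
rewrite htau in hW.
have [w0 w0W] : exists w0, w0 \in W by apply/set0Pn; rewrite -card_gt0 hW; lia.
have [x [w1 [xW w1W exw1]]] : exists x w1, [/\ x \notin W, w1 \in W & e x w1].
  case: (boolP [exists x, exists w1, [&& x \notin W, w1 \in W & e x w1]]).
    by case/existsP => x /existsP [w1 /and3P[? ? ?]]; exists x, w1.
  move=> nex; exfalso.
  have hlt : #|W| < #|T| by rewrite hW; lia.
  have [v vW] := outside hlt; case/negP: vW.
  apply: (reach v sg conn _ w0W) => p q epq pW; apply: contraT => qW.
  case/negP: nex; apply/existsP; exists q; apply/existsP; exists p.
  by rewrite qW pW sym.
have xw1 : x != w1 by apply: contraNneq xW => ->.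
have xWa w : w \in W -> e x w.
  move=> wW; have [->//|ww1] := eqVneq w w1.
  have xw : x != w by apply: contraNneq xW => ->.
  have := twins_nb (twW w1 w w1W wW) xw1 xw.
  by rewrite sym exw1 sym.
apply: beta_of; first exact: leq_subr.
  move=> P loc; have := twin_lower_card loc twW; rewrite hW leq_eqVlt => /orP[/eqP hP|]; last lia.
  exfalso; have inj := twin_lower loc twW.
  have [/and3P[/eqP cP tP _] _] := andP loc.
  have hcard : #|pblock P @: W| = #|W| := card_in_imset inj.
  have img : pblock P @: W = P.
    apply/eqP; rewrite eqEcard hcard hW hP leqnn andbT.
    by apply/subsetP => _ /imsetP[w _ ->]; apply: pblock_mem; rewrite cP inE.
  have px : pblock P x \in P by apply: pblock_mem; rewrite cP inE.
  have : pblock P x \in pblock P @: W by rewrite img.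
  case/imsetP => w2 w2W hx.
  have xw2 : x != w2 by apply: contraNneq xW => ->.
  have [S SP hd] := locating_pblock loc xw2 hx.
  have mp z : z \in pblock P z by rewrite mem_pblock cP inE.
  have hS : S \in pblock P @: W by rewrite img.
  move: hd; case/imsetP: hS => w wW ->.
  have [ww2|ww2] := eqVneq w w2.
    subst w; rewrite !dist_set_in ?eqxx //; by rewrite -hx.
  have pw : pblock P w \in P by apply: pblock_mem; rewrite cP inE.
  have w2n : w2 \notin pblock P w.
    apply: contra ww2 => h; have := def_pblock tP pw h => /(inj _ _ w2W wW) ->.
    by rewrite eqxx.
  have xn : x \notin pblock P w.
    apply: contra ww2 => h; have := def_pblock tP pw h; rewrite hx => /(inj _ _ w2W wW) ->.
    by rewrite eqxx.
  rewrite (dist_set_adj hT xn (mp w) (xWa w wW)).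
  by rewrite (dist_set_adj hT w2n (mp w) (cW w2 w w2W wW (nsym _ _ ww2))).
have hlt : #|x |: W| < #|T| by apply: leq_ltn_trans (card_U1_le _ _) _; rewrite hW; lia.
have [y] := outside hlt; rewrite !inE negb_or => /andP[yx yW].
have cls u : [\/ u \in W, u = x | u = y].
  case: (boolP (u \in W)) => uW; first by constructor 1.
  have [->|ux] := eqVneq u x; first by constructor 2.
  have [->|uy] := eqVneq u y; first by constructor 3.
  by case: (three_out hW xW yW (nsym _ _ yx) uW ux uy).
have w0x : w0 != x by apply: contraTneq w0W => ->.
have w0y : w0 != y by apply: contraTneq w0W => ->.
case: (boolP [exists w, (w \in W) && e y w]).
  case/existsP => w3 /andP[w3W eyw3].
  have yWa w : w \in W -> e y w.
    move=> wW; have [->//|ww3] := eqVneq w w3.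
    have yw3 : y != w3 by apply: contraNneq yW => ->.
    have yw : y != w by apply: contraNneq yW => ->.
    have := twins_nb (twW w3 w w3W wW) yw3 yw.
    by rewrite sym eyw3 sym.
  case: (boolP (e x y)) => [exy|nexy].
    exfalso.
    have allE u v : u != v -> e u v.
      move=> uv; case: (cls u) => [uW|?|?]; case: (cls v) => [vW|?|?]; subst.
      - exact: cW.
      - by rewrite sym; apply: xWa.
      - by rewrite sym; apply: yWa.
      - by apply: xWa.
      - by rewrite eqxx in uv.
      - exact: exy.
      - by apply: yWa.
      - by rewrite sym.
      - by rewrite eqxx in uv.
    have := @tn_ge T e [set: T] x (in_setT x) (fun v _ => complete_twins x v irr allE).
    rewrite cardsT htau; lia.
  apply: (good1 hT (nsym _ _ w0y) (nsym _ _ yx) (nsym _ _ w0x)).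
  by rewrite sym (negbTE nexy) sym xWa.
move=> nex.
have : 1 < #|W| by rewrite hW; lia.
case/card_gt1P => u1 [u2 [u1W u2W u12]].
have yu1 : y != u1 by apply: contraNneq yW => ->.
have u2y : u2 != y by apply: contraTneq u2W => ->.
apply: (good1 hT yu1 u2y (nsym _ _ u12)).
rewrite (cW u1 u2 u1W u2W u12).
case: (boolP (e y u2)) => // eyu2; case/negP: nex.
by apply/existsP; exists u2; rewrite u2W.
Qed.

Unset Implicit Arguments.

Theorem proposition21 (T : finType) (e : rel T) (W : {set T}) :
  simple_graph e -> graph_connected e -> 9 <= #|T| -> tau_set e W ->
  (beta_p e = #|T| - 1 <->
   (twin_number e = #|T| - 1 \/
    (twin_number e = #|T| - 2 /\ induces_complete e W))).
Proof.
move=> sg conn h9 tW; split.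
  by move=> hb; apply: (fwd sg conn h9 tW hb).
case=> [h|[h c]].
  by apply: (bwd1 sg conn h9 tW h).
by apply: (bwd2 sg conn h9 tW h c).
Qed.
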